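(* Let $m\ge2$ be even and let $\mathcal{A},\mathcal{B}$ be real $m$-th order $n$-dimensional tensors ($n=n_1+\cdots+n_r$) that are sub-symmetric. Then there exists $(x,\lambda)$ with $x\neq0$, $x\in\mathcal{K}$, $(\lambda\mathcal{A}-\mathcal{B})x^{m-1}\in\mathcal{K}$ and $\langle x,(\lambda\mathcal{A}-\mathcal{B})x^{m-1}\rangle=0$ if and only if the problem $$\begin{array}{cl}\min & f(x,y,w,\lambda):=\|y-\lambda^{\frac1{m-1}}x\|^2+(x^\top w)^2\\ \text{s.t.} & w-\mathcal{A}y^{m-1}+\mathcal{B}x^{m-1}=0,\\ & (x^i_\circ)^2-\|x^i_\bullet\|^2\ge0,\ x^i_\circ\ge0,\ i=1,\ldots,r,\\ & (w^i_\circ)^2-\|w^i_\bullet\|^2\ge0,\ w^i_\circ\ge0,\ i=1,\ldots,r,\\ & e^\top x=1,\quad e^\top y=\lambda^{\frac1{m-1}},\end{array}$$ over $(x,y,w,\lambda)\in\mathbb{R}^n\times\mathbb{R}^n\times\mathbb{R}^n\times\mathbb{R}$ has a global minimizer at which the objective value is zero.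
   Context: A real $m$-th order $n$-dimensional tensor is $\mathcal{A}=(a_{i_1\ldots i_m})$; it is sub-symmetric if for each $i$ the $(m-1)$-th order tensor $(a_{ii_2\ldots i_m})_{i_2,\ldots,i_m}$ is symmetric (invariant under permutations of $i_2,\ldots,i_m$). $\mathcal{A}x^{m-1}\in\mathbb{R}^n$ has $i$-th component $\sum_{i_2,\ldots,i_m}a_{ii_2\ldots i_m}x_{i_2}\cdots x_{i_m}$. Vectors are written $x=(x^1,\ldots,x^r)\in\mathbb{R}^{n_1}\times\cdots\times\mathbb{R}^{n_r}$, $x^i=(x^i_\circ,x^i_\bullet)\in\mathbb{R}\times\mathbb{R}^{n_i-1}$ (similarly for $y,w$). $\mathcal{K}=\mathcal{K}^{n_1}\times\cdots\times\mathcal{K}^{n_r}$, $\mathcal{K}^{n_i}=\{x^i:x^i_\circ\ge\|x^i_\bullet\|\}$. $e=(e^1,\ldots,e^r)$, $e^i=(1,0,\ldots,0)^\top\in\mathbb{R}^{n_i}$. Since $m-1$ is odd, $\lambda^{1/(m-1)}$ denotes the real $(m-1)$-th root of $\lambda\in\mathbb{R}$. *)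

(* Defs.v *)
From HB Require Import structures.
From mathcomp Require Import all_boot all_order all_algebra all_fingroup.
From mathcomp Require Import all_classical all_reals all_analysis.
Set Implicit Arguments. Unset Strict Implicit. Unset Printing Implicit Defensive.
Import Order.TTheory GRing.Theory Num.Theory.
Local Open Scope ring_scope.

Section Defs.
Variable R : realType.

(* Block structure: r blocks, block i has dimension n_i = (k i).+1 >= 1.
   Index set of R^n (n = n_1 + ... + n_r) is the disjoint union of the blocks. *)
Definition idx (r : nat) (k : 'I_r -> nat) : finType := {i : 'I_r & 'I_(k i).+1}.

Variables (r : nat) (k : 'I_r -> nat).
Local Notation J := (idx k).

Definition vec := J -> R.

(* An m-th order n-dimensional tensor a_{i1 i2 ... im}, given as
   A i1 (i2,...,im), the last m-1 indices packed in a finite function. *)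
Definition tensor (m : nat) := J -> {ffun 'I_m.-1 -> J} -> R.

Definition subsymmetric m (A : tensor m) : Prop :=
  forall (i : J) (s : {perm 'I_m.-1}) (t : {ffun 'I_m.-1 -> J}),
    A i [ffun l => t (s l)] = A i t.

Definition tapply m (A : tensor m) (x : vec) : vec :=
  fun i => \sum_(t : {ffun 'I_m.-1 -> J}) A i t * \prod_(l < m.-1) x (t l).

Definition tlin m (lam : R) (A B : tensor m) : tensor m :=
  fun i t => lam * A i t - B i t.

Definition xhead (x : vec) (i : 'I_r) : R := x (@Tagged _ i (fun i => 'I_(k i).+1) ord0).
Definition xtailsq (x : vec) (i : 'I_r) : R :=
  \sum_(l < (k i).+1 | l != ord0) x (@Tagged _ i (fun i => 'I_(k i).+1) l) ^+ 2.

Definition inK (x : vec) : Prop :=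
  forall i, Num.sqrt (xtailsq x i) <= xhead x i.

Definition inner (x y : vec) : R := \sum_(j : J) x j * y j.

Definition eT (x : vec) : R := \sum_(i < r) xhead x i.

Definition sqnorm (x : vec) : R := \sum_(j : J) x j ^+ 2.

Definition realroot (p : nat) (lam : R) : R :=
  if 0 <= lam then powR lam (p%:R^-1) else - powR (- lam) (p%:R^-1).

Definition fobj m (x y w : vec) (lam : R) : R :=
  sqnorm (fun j => y j - realroot m.-1 lam * x j) + (inner x w) ^+ 2.

Definition feasible m (A B : tensor m) (x y w : vec) (lam : R) : Prop :=
  [/\ forall j, w j - tapply A y j + tapply B x j = 0,
      forall i, 0 <= xhead x i ^+ 2 - xtailsq x i /\ 0 <= xhead x i,
      forall i, 0 <= xhead w i ^+ 2 - xtailsq w i /\ 0 <= xhead w i,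
      eT x = 1 &
      eT y = realroot m.-1 lam].

Definition global_minimizer m (A B : tensor m) (x y w : vec) (lam : R) : Prop :=
  feasible A B x y w lam /\
  forall x' y' w' lam', feasible A B x' y' w' lam' ->
    fobj m x y w lam <= fobj m x' y' w' lam'.

End Defs.

(* Main.v *)
Require Import Defs.
From HB Require Import structures.
From mathcomp Require Import all_boot all_order all_algebra all_fingroup.
From mathcomp Require Import all_classical all_reals all_analysis.
From mathcomp Require Import ring lra.
Import Order.TTheory GRing.Theory Num.Theory.
Local Open Scope ring_scope.

Set Implicit Arguments. Unset Strict Implicit.
Section Helpers.
Variable R : realType.
Variables (r : nat) (k : 'I_r -> nat).

Lemma realroot_pow (p : nat) (lam : R) : odd p -> realroot p lam ^+ p = lam.
Proof.
move=> hp; have p0 : (0 < p)%N by case: p hp.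
have key (a : R) : 0 <= a -> (powR a p%:R^-1) ^+ p = a.
  move=> a0; rewrite -powR_mulrn ?powR_ge0 // -powRrM mulVf ?powRr1 //.
  by rewrite pnatr_eq0 -lt0n.
rewrite /realroot; case: ifP => h; first exact: key.
rewrite -mulN1r exprMn key; last first.
  by rewrite oppr_ge0; move/negbT: h; rewrite -ltNge => /ltW.
by rewrite -signr_odd hp expr1 mulN1r opprK.
Qed.

Lemma tapply_scale m (A : tensor R k m) (c : R) (x : vec R k) i :
  tapply A (fun j => c * x j) i = c ^+ m.-1 * tapply A x i.
Proof.
rewrite /tapply mulr_sumr; apply: eq_bigr => t _.
rewrite big_split /= prodr_const card_ord; ring.
Qed.

Lemma tapply_tlin m (lam : R) (A B : tensor R k m) (x : vec R k) i :
  tapply (tlin lam A B) x i = lam * tapply A x i - tapply B x i.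
Proof.
rewrite /tapply /tlin mulr_sumr -sumrB; apply: eq_bigr => t _.
by rewrite mulrBl mulrA.
Qed.

Lemma xtailsq_ge0 (x : vec R k) i : 0 <= xtailsq x i.
Proof. by apply: sumr_ge0 => l _; apply: sqr_ge0. Qed.

Lemma inK_iff (x : vec R k) : inK x <->
  (forall i, 0 <= xhead x i ^+ 2 - xtailsq x i /\ 0 <= xhead x i).
Proof.
split=> H i.
  have h := H i; have h0 : 0 <= xhead x i by apply: le_trans h; apply: sqrtr_ge0.
  split=> //; rewrite subr_ge0 -(sqr_sqrtr (xtailsq_ge0 x i)).
  by apply: lerXn2r => //; rewrite qualifE /= ?sqrtr_ge0.
case: (H i) => h1 h2.
rewrite -(ger0_norm h2) -sqrtr_sqr ler_sqrt ?sqr_ge0 //.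
by rewrite -subr_ge0.
Qed.

Lemma inK_scale (x : vec R k) (c : R) : 0 <= c -> inK x -> inK (fun j => c * x j).
Proof.
move=> c0 /inK_iff H; apply/inK_iff => i; case: (H i) => h1 h2.
have -> : xhead (fun j => c * x j) i = c * xhead x i by [].
have -> : xtailsq (fun j => c * x j) i = c ^+ 2 * xtailsq x i.
  by rewrite /xtailsq mulr_sumr; apply: eq_bigr => l _; rewrite exprMn.
split; last exact: mulr_ge0.
by rewrite exprMn -mulrBr; apply: mulr_ge0 => //; apply: sqr_ge0.
Qed.

Lemma eT_gt0 (x : vec R k) : inK x -> (exists j, x j != 0) -> 0 < eT x.
Proof.
move=> /inK_iff H [j xj]; rewrite lt_def; apply/andP; split; last first.
  by rewrite /eT; apply: sumr_ge0 => i _; case: (H i).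
apply/negP => /eqP e0; move/negP: xj; apply; apply/eqP.
have hz : forall i, xhead x i = 0.
  move=> i; apply: (psumr_eq0P (P := predT) (F := xhead x)) => //.
  by move=> i' _; case: (H i').
case: j => i l.
have tz : xtailsq x i = 0.
  apply/eqP; rewrite eq_le xtailsq_ge0 andbT.
  by case: (H i) => h1 _; move: h1; rewrite hz expr0n /= sub0r oppr_ge0.
case: (eqVneq l ord0) => [->|ln]; first exact: hz.
have := psumr_eq0P (P := fun l => l != ord0)
  (F := fun l => x (@Tagged _ i (fun i => 'I_(k i).+1) l) ^+ 2)
  (fun l' _ => sqr_ge0 _) tz ln.
by move/eqP; rewrite sqrf_eq0 => /eqP.
Qed.

Lemma fobj_ge0 m (x y w : vec R k) lam : 0 <= fobj m x y w lam.
Proof.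
apply: addr_ge0; last exact: sqr_ge0.
by apply: sumr_ge0 => j _; apply: sqr_ge0.
Qed.

End Helpers.

Theorem theorem4 (R : realType) (m : nat) (hm2 : (2 <= m)%N) (hmeven : ~~ odd m)
    (r : nat) (k : 'I_r -> nat) (A B : tensor R k m) :
  subsymmetric A -> subsymmetric B ->
  ((exists (x : vec R k) (lam : R),
      (exists j, x j != 0) /\ inK x /\ inK (tapply (tlin lam A B) x) /\
      inner x (tapply (tlin lam A B) x) = 0)
   <->
   (exists (x y w : vec R k) (lam : R),
      global_minimizer A B x y w lam /\ fobj m x y w lam = 0)).
Proof.
move=> _ _.
have hp : odd m.-1 by move: hm2 hmeven; case: (m) => // m' _ /=; rewrite negbK.
set p := m.-1 in hp *.
split.
- move=> [x [lam [nz [xK [TK io]]]]].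
  have e0 := eT_gt0 xK nz.
  set c := (eT x)^-1.
  have c0 : 0 < c by rewrite invr_gt0.
  set mu := realroot p lam.
  pose x' := fun j => c * x j.
  pose y := fun j => mu * x' j.
  pose w := fun j => c ^+ p * tapply (tlin lam A B) x j.
  have fz : fobj m x' y w lam = 0.
    rewrite /fobj.
    have -> : inner x' w = 0.
      rewrite /inner /x' /w.
      transitivity (c * c ^+ p * inner x (tapply (tlin lam A B) x)).
        by rewrite /inner mulr_sumr; apply: eq_bigr => j _; ring.
      by rewrite io mulr0.
    rewrite expr0n /= addr0 /sqnorm; apply: big1 => j _.
    by rewrite /y subrr expr0n.
  have feas : feasible A B x' y w lam.
    split.
    + move=> j; rewrite /y tapply_scale /x' !tapply_scale /w tapply_tlin.
      rewrite /mu realroot_pow //; ring.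
    + by apply/inK_iff; apply: inK_scale => //; apply: ltW.
    + by apply/inK_iff; apply: inK_scale => //; rewrite exprn_ge0 // ltW.
    + rewrite /eT /xhead /x' -mulr_sumr mulVf //; exact: lt0r_neq0.
    + rewrite /eT /xhead /y /x' -mulr_sumr -mulr_sumr mulVf ?mulr1 //.
      exact: lt0r_neq0.
  exists x', y, w, lam; split => //; split => // x1 y1 w1 l1 _.
  by rewrite fz fobj_ge0.
- move=> [x [y [w [lam [[[H1 H2 H3 H4 H5] _] fz]]]]].
  exists x, lam.
  move: fz; rewrite /fobj => /eqP; rewrite paddr_eq0; last exact: sqr_ge0; last first.
    by apply: sumr_ge0 => j _; apply: sqr_ge0.
  case/andP => /eqP s0; rewrite sqrf_eq0 => /eqP i0.
  have yE : forall j, y j = realroot p lam * x j.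
    move=> j; have := psumr_eq0P (P := predT) _ s0 (i := j).
    move=> /(_ (fun j _ => sqr_ge0 _) isT) /eqP; rewrite sqrf_eq0 subr_eq0.
    by move/eqP.
  have wE : forall j, w j = tapply (tlin lam A B) x j.
    move=> j; rewrite tapply_tlin -(realroot_pow lam hp).
    have := H1 j.
    have -> : tapply A y j = realroot p lam ^+ p * tapply A x j.
      by rewrite -tapply_scale; congr tapply; apply: funext => i; rewrite yE.
    by move=> h; apply/eqP; rewrite -subr_eq0 -[X in _ == X]h; apply/eqP; ring.
  split.
    case: (pselect (exists j, x j != 0)) => // /forallNP hn.
    have : eT x = 0.
      rewrite /eT big1 // => i _.
      have h := hn (@Tagged _ i (fun i => 'I_(k i).+1) ord0).
      by case: eqP h => // _; apply; apply/eqP.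
    by rewrite H4 => /eqP; rewrite oner_eq0.
  split; first by apply/inK_iff.
  have wT : w = tapply (tlin lam A B) x by apply: funext => j; rewrite wE.
  rewrite -wT; split; first by apply/inK_iff.
  exact: i0.
Qed.
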